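(* Suppose Assumptions 1–4 hold and $p$ is convex. Let $\mathbf{x}$ be a Cournot candidate which is not socially optimal, and let $\alpha_n=C_n'(x_n)$ for each $n$. Consider the modified model in which each cost function $C_n$ is replaced by $\overline C_n(x)=\alpha_n x$ for $x\ge0$ (same $p$, same $N$). Then for the modified model Assumptions 1–4 still hold, $\mathbf{x}$ is a Cournot candidate, and its efficiency $\overline\gamma(\mathbf{x})$ in the modified model satisfies $0<\overline\gamma(\mathbf{x})\le\gamma(\mathbf{x})$, where $\gamma(\mathbf{x})$ is its efficiency in the original model.
   Context: Cournot model: $N$ suppliers, inverse demand $p:[0,\infty)\to[0,\infty)$, supplier $n$ has cost $C_n:[0,\infty)\to[0,\infty)$ and chooses $x_n\ge0$; $X=\sum_n x_n$. $\partial_\pm$ denote right/left derivatives; $C_n'(0)$ is the right derivative at $0$. Assumption 1: each $C_n$ is convex, continuous, nondecreasing on $[0,\infty)$, continuously differentiable on $(0,\infty)$, with $C_n(0)=0$. Assumption 2: $p$ is continuous, nonnegative, nonincreasing, $p(0)>0$; its right derivative at $0$ exists and at every $q>0$ its left and right derivatives exist. Assumption 3: there exists $R>0$ such that $p(R)\le\min_n C_n'(0)$. Assumption 4: $p(0)>\min_n C_n'(0)$. Social welfare of $\mathbf{x}\ge0$: $W(\mathbf{x})=\int_0^X p(q)\,dq-\sum_{n=1}^N C_n(x_n)$; a social optimum $\mathbf{x}^S$ maximizes $W$ over nonnegative vectors (one exists under these assumptions). Efficiency of $\mathbf{x}\ge0$: $\gamma(\mathbf{x})=W(\mathbf{x})/W(\mathbf{x}^S)$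 (the denominator is positive and independent of the choice of social optimum). A nonnegative vector $\mathbf{x}$ is a Cournot candidate if for every $n$: $C_n'(x_n)\le p(X)+x_n\,\partial_-p(X)$ whenever $x_n>0$, and $C_n'(x_n)\ge p(X)+x_n\,\partial_+p(X)$. *)

(* Defs.v *)
From Stdlib Require Import Reals Lra Classical ClassicalEpsilon.
Open Scope R_scope.

Fixpoint sumN (N : nat) (f : nat -> R) : R :=
  match N with O => 0 | S k => sumN k f + f k end.

(* Riemann integral of f over [a,b] (well defined since RiemannInt is
   independent of the integrability proof; arbitrary if not integrable). *)
Definition Rint (f : R -> R) (a b : R) : R :=
  epsilon (inhabits 0)
    (fun v => exists pr : Riemann_integrable f a b, RiemannInt pr = v).

Definition right_deriv (f : R -> R) (x l : R) : Prop :=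
  forall eps, 0 < eps -> exists delta, 0 < delta /\
    forall h, 0 < h < delta -> Rabs ((f (x + h) - f x) / h - l) < eps.

Definition left_deriv (f : R -> R) (x l : R) : Prop :=
  forall eps, 0 < eps -> exists delta, 0 < delta /\
    forall h, 0 < h < delta -> Rabs ((f x - f (x - h)) / h - l) < eps.

Definition convex_nonneg (f : R -> R) : Prop :=
  forall x y t, 0 <= x -> 0 <= y -> 0 <= t <= 1 ->
    f (t * x + (1 - t) * y) <= t * f x + (1 - t) * f y.

Definition continuous_nonneg (f : R -> R) : Prop :=
  forall x, 0 <= x -> forall eps, 0 < eps -> exists delta, 0 < delta /\
    forall y, 0 <= y -> Rabs (y - x) < delta -> Rabs (f y - f x) < eps.

Definition nondecreasing_nonneg (f : R -> R) : Prop :=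
  forall x y, 0 <= x -> x <= y -> f x <= f y.

Definition nonincreasing_nonneg (f : R -> R) : Prop :=
  forall x y, 0 <= x -> x <= y -> f y <= f x.

(* dC n is the derivative C_n' of C n: right derivative at 0,
   derivative at every x > 0 *)
Definition Assumption1 (N : nat) (C : nat -> R -> R) (dC : nat -> R -> R)
  : Prop :=
  forall n, (n < N)%nat ->
    convex_nonneg (C n) /\ continuous_nonneg (C n) /\
    nondecreasing_nonneg (C n) /\ C n 0 = 0 /\
    (forall x, 0 <= x -> 0 <= C n x) /\
    right_deriv (C n) 0 (dC n 0) /\
    (forall x, 0 < x -> derivable_pt_lim (C n) x (dC n x)) /\
    (forall x, 0 < x -> continuity_pt (dC n) x).

(* dpp q = right derivative of p at q (q >= 0),
   dpm q = left derivative of p at q (q > 0) *)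
Definition Assumption2 (p dpp dpm : R -> R) : Prop :=
  continuous_nonneg p /\ (forall q, 0 <= q -> 0 <= p q) /\
  nonincreasing_nonneg p /\ 0 < p 0 /\
  (forall q, 0 <= q -> right_deriv p q (dpp q)) /\
  (forall q, 0 < q -> left_deriv p q (dpm q)).

Definition Assumption3 (N : nat) (p : R -> R) (dC : nat -> R -> R) : Prop :=
  exists Rb, 0 < Rb /\ forall n, (n < N)%nat -> p Rb <= dC n 0.

Definition Assumption4 (N : nat) (p : R -> R) (dC : nat -> R -> R) : Prop :=
  exists n, (n < N)%nat /\ dC n 0 < p 0.

Definition nonneg_vec (N : nat) (x : nat -> R) : Prop :=
  forall n, (n < N)%nat -> 0 <= x n.

Definition total (N : nat) (x : nat -> R) : R := sumN N x.

Definition welfare (N : nat) (p : R -> R) (C : nat -> R -> R) (x : nat -> R)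
  : R := Rint p 0 (total N x) - sumN N (fun n => C n (x n)).

Definition social_opt (N : nat) (p : R -> R) (C : nat -> R -> R)
  (x : nat -> R) : Prop :=
  nonneg_vec N x /\
  forall y, nonneg_vec N y -> welfare N p C y <= welfare N p C x.

Definition cournot_candidate (N : nat) (p dpp dpm : R -> R)
  (dC : nat -> R -> R) (x : nat -> R) : Prop :=
  nonneg_vec N x /\
  forall n, (n < N)%nat ->
    (0 < x n -> dC n (x n) <= p (total N x) + x n * dpm (total N x)) /\
    p (total N x) + x n * dpp (total N x) <= dC n (x n).

(* Main.v *)
Require Import Defs.
From Stdlib Require Import Reals Lra Lia Classical ClassicalEpsilon.
Open Scope R_scope.

Lemma sumN_ext N f g : (forall n, (n < N)%nat -> f n = g n) -> sumN N f = sumN N g.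
Proof. induction N; simpl; intros H; auto. rewrite IHN, H; auto. Qed.

Lemma sumN_le N f g : (forall n, (n < N)%nat -> f n <= g n) -> sumN N f <= sumN N g.
Proof. induction N; simpl; intros H; [lra|]. assert (sumN N f <= sumN N g) by auto.
  assert (f N <= g N) by auto. lra. Qed.

Lemma sumN_plus N f g : sumN N (fun n => f n + g n) = sumN N f + sumN N g.
Proof. induction N; simpl; [lra|]. rewrite IHN; ring. Qed.

Lemma sumN_minus N f g : sumN N (fun n => f n - g n) = sumN N f - sumN N g.
Proof. induction N; simpl; [lra|]. rewrite IHN; ring. Qed.

Lemma sumN_scal N c f : sumN N (fun n => c * f n) = c * sumN N f.
Proof. induction N; simpl; [lra|]. rewrite IHN; ring. Qed.

Lemma sumN_nonneg N f : (forall n, (n < N)%nat -> 0 <= f n) -> 0 <= sumN N f.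
Proof. induction N; simpl; intros H; [lra|]. assert (0 <= sumN N f) by auto.
  assert (0 <= f N) by auto. lra. Qed.

Lemma sumN_ge_term N f : (forall n, (n < N)%nat -> 0 <= f n) ->
  forall n, (n < N)%nat -> f n <= sumN N f.
Proof. induction N; simpl; intros H n Hn; [lia|].
  assert (0 <= sumN N f) by (apply sumN_nonneg; auto).
  destruct (Nat.eq_dec n N). subst; lra.
  assert (f n <= sumN N f) by (apply IHN; auto; lia). assert (0 <= f N) by auto. lra. Qed.

Lemma sumN_nonneg_zero N f : (forall n, (n < N)%nat -> 0 <= f n) -> sumN N f <= 0 ->
  forall n, (n < N)%nat -> f n = 0.
Proof. intros H Hs n Hn. assert (f n <= sumN N f) by (apply sumN_ge_term; auto).
  assert (0 <= f n) by auto. lra. Qed.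

Lemma div_le a s h : 0 < h -> a <= s * h -> a / h <= s.
Proof. intros Hh H. replace s with ((s*h)/h) by (field; lra). unfold Rdiv.
  apply Rmult_le_compat_r; [left; apply Rinv_0_lt_compat; auto|auto]. Qed.

Lemma div_ge a s h : 0 < h -> s * h <= a -> s <= a / h.
Proof. intros Hh H. replace s with ((s*h)/h) by (field; lra). unfold Rdiv.
  apply Rmult_le_compat_r; [left; apply Rinv_0_lt_compat; auto|auto]. Qed.

Lemma lim_le (g : R -> R) l s d0 : 0 < d0 -> (forall h, 0 < h < d0 -> g h <= s) ->
  (forall eps, 0 < eps -> exists delta, 0 < delta /\ forall h, 0 < h < delta -> Rabs (g h - l) < eps) ->
  l <= s.
Proof. intros Hd Hg Hl. destruct (Rle_or_lt l s) as [|Hc]; auto.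
  destruct (Hl (l - s)) as [d [Hd' Hh]]; [lra|].
  set (h := Rmin d0 d / 2).
  assert (0 < Rmin d0 d) by (apply Rmin_pos; auto).
  assert (Rmin d0 d <= d0) by apply Rmin_l. assert (Rmin d0 d <= d) by apply Rmin_r.
  assert (0 < h < d) by (unfold h; lra). assert (0 < h < d0) by (unfold h; lra).
  specialize (Hh h ltac:(auto)). specialize (Hg h ltac:(auto)).
  apply Rabs_def2 in Hh. lra. Qed.

Lemma lim_ge (g : R -> R) l s d0 : 0 < d0 -> (forall h, 0 < h < d0 -> s <= g h) ->
  (forall eps, 0 < eps -> exists delta, 0 < delta /\ forall h, 0 < h < delta -> Rabs (g h - l) < eps) ->
  s <= l.
Proof. intros Hd Hg Hl. destruct (Rle_or_lt s l) as [|Hc]; auto.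
  destruct (Hl (s - l)) as [d [Hd' Hh]]; [lra|].
  set (h := Rmin d0 d / 2).
  assert (0 < Rmin d0 d) by (apply Rmin_pos; auto).
  assert (Rmin d0 d <= d0) by apply Rmin_l. assert (Rmin d0 d <= d) by apply Rmin_r.
  assert (0 < h < d) by (unfold h; lra). assert (0 < h < d0) by (unfold h; lra).
  specialize (Hh h ltac:(auto)). specialize (Hg h ltac:(auto)).
  apply Rabs_def2 in Hh. lra. Qed.

Lemma conv_right f a l y : convex_nonneg f -> 0 <= a -> right_deriv f a l -> a <= y ->
  f a + l * (y - a) <= f y.
Proof. intros Hc Ha Hr Hy. destruct (Req_dec a y) as [<-|Hne]; [lra|].
  assert (Hlt : a < y) by lra.
  set (s := (f y - f a) / (y - a)).
  assert (l <= s).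
  { apply (lim_le (fun h => (f (a + h) - f a) / h) l s (y - a)); [lra| |exact Hr].
    intros h Hh. apply div_le; [lra|].
    set (t := (y - a - h) / (y - a)).
    assert (Ht : 0 <= t <= 1).
    { unfold t; split. apply div_ge; lra. apply div_le; lra. }
    pose proof (Hc a y t Ha ltac:(lra) Ht) as Hc'.
    replace (t * a + (1 - t) * y) with (a + h) in Hc' by (unfold t; field; lra).
    assert (Heq : (1 - t) = h / (y - a)) by (unfold t; field; lra).
    assert (s * h = (1 - t) * (f y - f a)) by (rewrite Heq; unfold s; field; lra).
    lra. }
  assert (s * (y - a) = f y - f a) by (unfold s; field; lra).
  assert (l * (y - a) <= s * (y - a)) by (apply Rmult_le_compat_r; lra). lra. Qed.

Lemma conv_left f a l y : convex_nonneg f -> 0 <= y -> y < a -> left_deriv f a l ->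
  f a + l * (y - a) <= f y.
Proof. intros Hc Hy Hlt Hl.
  set (s := (f a - f y) / (a - y)).
  assert (s <= l).
  { apply (lim_ge (fun h => (f a - f (a - h)) / h) l s (a - y)); [lra| |exact Hl].
    intros h Hh. apply div_ge; [lra|].
    set (t := h / (a - y)).
    assert (Ht : 0 <= t <= 1).
    { unfold t; split. apply div_ge; lra. apply div_le; lra. }
    pose proof (Hc y a t Hy ltac:(lra) Ht) as Hc'.
    replace (t * y + (1 - t) * a) with (a - h) in Hc' by (unfold t; field; lra).
    assert (s * h = t * (f a - f y)) by (unfold s, t; field; lra).
    lra. }
  assert (s * (a - y) = f a - f y) by (unfold s; field; lra).
  assert (s * (a - y) <= l * (a - y)) by (apply Rmult_le_compat_r; lra). lra. Qed.

Lemma dpl_right f x l : derivable_pt_lim f x l -> right_deriv f x l.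
Proof. intros H eps He. destruct (H eps He) as [d Hd]. exists d; split; [apply cond_pos|].
  intros h Hh. apply Hd; [lra|]. rewrite Rabs_pos_eq; lra. Qed.

Lemma dpl_left f x l : derivable_pt_lim f x l -> left_deriv f x l.
Proof. intros H eps He. destruct (H eps He) as [d Hd]. exists d; split; [apply cond_pos|].
  intros h Hh. specialize (Hd (- h) ltac:(lra)).
  rewrite Rabs_Ropp, Rabs_pos_eq in Hd by lra. specialize (Hd ltac:(lra)).
  replace ((f x - f (x - h)) / h) with ((f (x + - h) - f x) / - h); auto.
  replace (x + - h) with (x - h) by ring. field; lra. Qed.

Lemma left_deriv_nonpos p X l : nonincreasing_nonneg p -> 0 < X -> left_deriv p X l -> l <= 0.
Proof. intros Hp HX Hl. apply (lim_le (fun h => (p X - p (X - h)) / h) l 0 X HX); auto.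
  intros h Hh. apply div_le; [lra|]. assert (p X <= p (X - h)) by (apply Hp; lra). lra. Qed.

Lemma cont_ext p : continuous_nonneg p -> forall x, continuity_pt (fun y => p (Rmax 0 y)) x.
Proof. intros Hp x0 eps He.
  assert (H0 : 0 <= Rmax 0 x0) by apply Rmax_l.
  destruct (Hp _ H0 eps He) as [d [Hd Hy]]. exists d; split; auto.
  intros y [_ Hyd]. simpl in *. unfold R_dist in *. apply Hy. apply Rmax_l.
  eapply Rle_lt_trans; [|exact Hyd].
  unfold Rmax; destruct (Rle_dec 0 y), (Rle_dec 0 x0); unfold Rabs;
    repeat destruct Rcase_abs; lra. Qed.

Lemma p_integrable p a b : continuous_nonneg p -> 0 <= a <= b -> Riemann_integrable p a b.
Proof. intros Hp Hab.
  refine (@Riemann_integrable_ext (fun y => p (Rmax 0 y)) p a b _ _).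
  - intros x Hx. rewrite Rmin_left, Rmax_right in Hx by lra. f_equal. apply Rmax_right. lra.
  - apply continuity_implies_RiemannInt; [lra|]. intros; apply cont_ext; auto.
Defined.

Lemma Rint_eq f a b (pr : Riemann_integrable f a b) : Rint f a b = RiemannInt pr.
Proof. unfold Rint.
  destruct (epsilon_spec (inhabits 0) (fun v => exists pr : Riemann_integrable f a b, RiemannInt pr = v))
    as [pr' Hpr']. { exists (RiemannInt pr), pr; auto. }
  rewrite <- Hpr'. apply RiemannInt_P5. Qed.

Lemma Rint_bound p a b l u : continuous_nonneg p -> 0 <= a <= b ->
  (forall x, a < x < b -> l <= p x <= u) -> l * (b - a) <= Rint p a b <= u * (b - a).
Proof. intros Hp Hab H. pose proof (p_integrable p a b Hp Hab) as pr.
  rewrite (Rint_eq _ _ _ pr). apply RiemannInt_const_bound; auto; lra. Qed.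

Lemma Rint_chasles p a b c : continuous_nonneg p -> 0 <= a <= b -> b <= c ->
  Rint p a b + Rint p b c = Rint p a c.
Proof. intros Hp Hab Hbc.
  rewrite (Rint_eq _ _ _ (p_integrable p a b Hp Hab)).
  rewrite (Rint_eq _ _ _ (p_integrable p b c Hp ltac:(lra))).
  rewrite (Rint_eq _ _ _ (p_integrable p a c Hp ltac:(lra))).
  apply RiemannInt_P26. Qed.

Theorem proposition6 (N : nat) (p dpp dpm : R -> R) (C dC : nat -> R -> R)
  (x : nat -> R) :
  Assumption1 N C dC -> Assumption2 p dpp dpm ->
  Assumption3 N p dC -> Assumption4 N p dC ->
  convex_nonneg p ->
  cournot_candidate N p dpp dpm dC x ->
  ~ social_opt N p C x ->
  let alpha := fun n => dC n (x n) in
  let Cb := fun n y => alpha n * y in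
  let dCb := fun n (_ : R) => alpha n in
  Assumption1 N Cb dCb /\ Assumption2 p dpp dpm /\
  Assumption3 N p dCb /\ Assumption4 N p dCb /\
  cournot_candidate N p dpp dpm dCb x /\
  (forall xS xSb, social_opt N p C xS -> social_opt N p Cb xSb ->
     0 < welfare N p Cb x / welfare N p Cb xSb <=
         welfare N p C x / welfare N p C xS).
Proof.
  intros H1 H2 H3 H4 Hpconv Hcc Hnso alpha Cb dCb.
  destruct H2 as [Hpc [Hpnn [Hpni [Hp0 [Hdpp Hdpm]]]]].
  destruct Hcc as [Hxnn Hcc].
  set (X := total N x). set (P := p X).
  assert (HX0 : 0 <= X) by (apply sumN_nonneg; auto).
  assert (Hxle : forall n, (n < N)%nat -> x n <= X)
    by (intros; apply sumN_ge_term; auto).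
  assert (Hsub : forall n, (n < N)%nat -> forall y, 0 <= y ->
            C n (x n) + alpha n * (y - x n) <= C n y).
  { intros n Hn y Hy. destruct (H1 n Hn) as [Hc [_ [_ [_ [_ [Hr [Hd _]]]]]]].
    pose proof (Hxnn n Hn) as Hxn. unfold alpha.
    destruct (Rle_or_lt (x n) y).
    - destruct (Req_dec (x n) 0) as [He|Hne].
      + rewrite He. apply conv_right; auto; lra.
      + apply conv_right; auto. apply dpl_right, Hd; lra.
    - apply conv_left; auto. apply dpl_left, Hd; lra. }
  assert (Hd0 : forall n, (n < N)%nat -> dC n 0 <= alpha n).
  { intros n Hn. destruct (H1 n Hn) as [Hc [_ [_ [HC0 [_ [Hr _]]]]]].
    pose proof (Hxnn n Hn) as Hxn.
    destruct (Req_dec (x n) 0) as [He|Hne].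
    - unfold alpha; rewrite He; lra.
    - pose proof (conv_right _ _ _ (x n) Hc (Rle_refl 0) Hr Hxn).
      pose proof (Hsub n Hn 0 (Rle_refl 0)).
      assert (dC n 0 * x n <= alpha n * x n) by lra.
      apply Rmult_le_reg_r with (x n); lra. }
  destruct H3 as [Rb [HRb HRb']].
  assert (Hanl : forall n, (n < N)%nat -> 0 <= alpha n).
  { intros n Hn. pose proof (HRb' n Hn). pose proof (Hd0 n Hn).
    pose proof (Hpnn Rb ltac:(lra)). lra. }
  assert (Hb : forall n, (n < N)%nat -> 0 < x n -> alpha n <= P).
  { intros n Hn Hx. destruct (Hcc n Hn) as [Hc _]. specialize (Hc Hx).
    assert (0 < X) by (pose proof (Hxle n Hn); lra).
    pose proof (left_deriv_nonpos p X _ Hpni H (Hdpm X H)).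
    assert (x n * dpm X <= 0) by nra.
    unfold alpha, P, X in *. lra. }
  assert (Ha : forall n, (n < N)%nat -> x n = 0 -> P <= alpha n).
  { intros n Hn Hx. destruct (Hcc n Hn) as [_ Hc]. rewrite Hx in Hc. unfold alpha, P, X.
    rewrite Hx. lra. }
  assert (HsumaX : sumN N (fun n => alpha n * x n) <= P * X).
  { unfold X, total. rewrite <- sumN_scal. apply sumN_le. intros n Hn.
    pose proof (Hxnn n Hn). destruct (Req_dec (x n) 0) as [He|Hne].
    - rewrite He; lra.
    - apply Rmult_le_compat_r; [lra|]. apply Hb; auto; lra. }
  assert (HintX : P * X <= Rint p 0 X).
  { pose proof (Rint_bound p 0 X P (p 0) Hpc ltac:(lra)) as Hbd.
    assert (forall q, 0 < q < X -> P <= p q <= p 0).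
    { intros q Hq. split; apply Hpni; lra. }
    specialize (Hbd ltac:(assumption)). lra. }
  assert (Wpos : 0 < welfare N p Cb x).
  { destruct (Rlt_or_le 0 (welfare N p Cb x)) as [|Hw]; auto. exfalso. apply Hnso.
    unfold welfare, Cb in Hw. fold (total N x) in Hw. fold X in Hw.
    assert (HeqS : sumN N (fun n => alpha n * x n) = P * X) by lra.
    assert (HeqI : Rint p 0 X = P * X) by lra.
    assert (Hall : forall n, (n < N)%nat -> P <= alpha n).
    { intros n Hn. destruct (Req_dec (x n) 0) as [He|Hne]; [apply Ha; auto|].
      assert (Hz : forall m, (m < N)%nat -> (P - alpha m) * x m = 0).
      { apply sumN_nonneg_zero.
        - intros m Hm. pose proof (Hxnn m Hm). destruct (Req_dec (x m) 0) as [He|Hne'].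
          + rewrite He; lra.
          + apply Rmult_le_pos; [|lra]. pose proof (Hb m Hm ltac:(lra)); lra.
        - rewrite (sumN_ext N _ (fun m => P * x m - alpha m * x m)) by (intros; ring).
          rewrite sumN_minus, sumN_scal. unfold X, total in HeqS. lra. }
      specialize (Hz n Hn). pose proof (Hxnn n Hn).
      destruct (Rmult_integral _ _ Hz); lra. }
    assert (HP0 : p 0 = P).
    { destruct (Req_dec X 0) as [HX|HX]; [unfold P; rewrite HX; auto|].
      assert (P <= p 0) by (apply Hpni; lra).
      destruct (Rle_lt_or_eq_dec _ _ H) as [Hlt|Heq]; [|symmetry; exact Heq]. exfalso.
      destruct (Hpc 0 (Rle_refl 0) ((p 0 - P)/2) ltac:(lra)) as [d [Hd Hcd]].
      set (de := Rmin (d/2) (X/2)).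
      assert (0 < de) by (apply Rmin_pos; lra).
      assert (de <= d/2) by apply Rmin_l. assert (de <= X/2) by apply Rmin_r.
      assert (Hpd : P < p de).
      { assert (Hdd : Rabs (de - 0) < d) by (rewrite Rminus_0_r, Rabs_pos_eq; lra).
        specialize (Hcd de ltac:(lra) Hdd).
        apply Rabs_def2 in Hcd. lra. }
      pose proof (Rint_chasles p 0 de X Hpc ltac:(lra) ltac:(lra)) as Hch.
      pose proof (Rint_bound p 0 de (p de) (p 0) Hpc ltac:(lra)) as B1.
      assert (forall q, 0 < q < de -> p de <= p q <= p 0) by (intros; split; apply Hpni; lra).
      specialize (B1 ltac:(assumption)).
      pose proof (Rint_bound p de X P (p 0) Hpc ltac:(lra)) as B2.
      assert (forall q, de < q < X -> P <= p q <= p 0) by (intros; split; apply Hpni; lra).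
      specialize (B2 ltac:(assumption)).
      assert (0 < (p de - P) * de) by (apply Rmult_lt_0_compat; lra).
      lra. }
    split; auto. intros y Hy. unfold welfare. fold (total N x). fold X.
    set (Y := total N y).
    assert (HY0 : 0 <= Y) by (apply sumN_nonneg; auto).
    assert (HIY : Rint p 0 Y <= P * Y).
    { pose proof (Rint_bound p 0 Y 0 (p 0) Hpc ltac:(lra)) as Hbd.
      assert (forall q, 0 < q < Y -> 0 <= p q <= p 0).
      { intros q Hq. split; [apply Hpnn; lra|apply Hpni; lra]. }
      specialize (Hbd ltac:(assumption)). rewrite HP0 in Hbd. lra. }
    assert (HC : sumN N (fun n => C n (x n)) + sumN N (fun n => alpha n * y n)
                 - sumN N (fun n => alpha n * x n) <= sumN N (fun n => C n (y n))).
    { rewrite <- sumN_plus, <- sumN_minus. apply sumN_le. intros n Hn.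
      pose proof (Hsub n Hn (y n) (Hy n Hn)). lra. }
    assert (HaY : P * Y <= sumN N (fun n => alpha n * y n)).
    { unfold Y, total. rewrite <- sumN_scal. apply sumN_le. intros n Hn.
      apply Rmult_le_compat_r; [apply Hy; auto|apply Hall; auto]. }
    lra. }
  set (d := sumN N (fun n => alpha n * x n - C n (x n))).
  assert (Hdnn : 0 <= d).
  { apply sumN_nonneg. intros n Hn. pose proof (Hsub n Hn 0 (Rle_refl 0)).
    destruct (H1 n Hn) as [_ [_ [_ [HC0 _]]]]. lra. }
  assert (HWx : welfare N p C x = welfare N p Cb x + d).
  { unfold welfare, d, Cb. rewrite sumN_minus. ring. }
  assert (HWy : forall y, nonneg_vec N y -> welfare N p C y <= welfare N p Cb y + d).
  { intros y Hy. unfold welfare, d, Cb. rewrite sumN_minus.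
    assert (sumN N (fun n => C n (x n)) + sumN N (fun n => alpha n * y n)
                 - sumN N (fun n => alpha n * x n) <= sumN N (fun n => C n (y n))).
    { rewrite <- sumN_plus, <- sumN_minus. apply sumN_le. intros n Hn.
      pose proof (Hsub n Hn (y n) (Hy n Hn)). lra. }
    lra. }
  split; [|split; [|split; [|split]]].
  -
    intros n Hn. pose proof (Hanl n Hn) as Ha0. unfold Cb, dCb.
    split; [|split; [|split; [|split; [|split; [|split; [|split]]]]]].
    + intros u v t _ _ _. right; ring.
    + intros u _ eps He. exists (eps / (alpha n + 1)). split; [apply Rdiv_lt_0_compat; lra|].
      intros v _ Hv. rewrite <- Rmult_minus_distr_l, Rabs_mult, (Rabs_pos_eq (alpha n)) by lra.
      pose proof (Rabs_pos (v - u)).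
      assert (Rabs (v - u) * (alpha n + 1) < eps).
      { apply Rmult_lt_reg_r with (/ (alpha n + 1)).
        apply Rinv_0_lt_compat; lra.
        replace (Rabs (v - u) * (alpha n + 1) * / (alpha n + 1)) with (Rabs (v - u)) by (field; lra).
        exact Hv. }
      nra.
    + intros u v Hu Huv. apply Rmult_le_compat_l; auto.
    + ring.
    + intros u Hu. apply Rmult_le_pos; auto.
    + intros eps He. exists 1. split; [lra|]. intros h Hh.
      replace ((alpha n * (0 + h) - alpha n * 0) / h - alpha n) with 0 by (field; lra).
      rewrite Rabs_R0; auto.
    + intros u _ eps He. exists (mkposreal 1 Rlt_0_1). intros h Hh _.
      replace ((alpha n * (u + h) - alpha n * u) / h - alpha n) with 0 by (field; lra).
      rewrite Rabs_R0; auto.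
    + intros u _. apply continuity_pt_const. intros a b; reflexivity.
  - repeat split; auto.
  - exists Rb. split; auto. intros n Hn. unfold dCb. pose proof (HRb' n Hn). pose proof (Hd0 n Hn). lra.
  - destruct (classic (exists n, (n < N)%nat /\ dCb n 0 < p 0)) as [|Hn]; auto. exfalso.
    assert (Hall : forall n, (n < N)%nat -> p 0 <= alpha n).
    { intros n Hn'. destruct (Rle_or_lt (p 0) (alpha n)); auto. exfalso. apply Hn. exists n; auto. }
    assert (p 0 * X <= sumN N (fun n => alpha n * x n)).
    { unfold X, total. rewrite <- sumN_scal. apply sumN_le. intros n Hn'.
      apply Rmult_le_compat_r; [apply Hxnn; auto|apply Hall; auto]. }
    pose proof (Rint_bound p 0 X 0 (p 0) Hpc ltac:(lra)) as Hbd.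
    assert (forall q, 0 < q < X -> 0 <= p q <= p 0).
    { intros q Hq. split; [apply Hpnn; lra|apply Hpni; lra]. }
    specialize (Hbd ltac:(assumption)). unfold welfare, Cb in Wpos. fold (total N x) in Wpos. fold X in Wpos. lra.
  - split; [split; [exact Hxnn|exact Hcc]|].
    intros xS xSb HS HSb.
    pose proof (proj2 HSb x Hxnn) as Hb1.
    pose proof (proj2 HSb xS (proj1 HS)) as Hb2.
    pose proof (proj2 HS x Hxnn) as Hc1.
    pose proof (HWy xS (proj1 HS)) as Hc2.
    rewrite HWx in *.
    set (a := welfare N p Cb x) in *. set (b := welfare N p Cb xSb) in *.
    set (c := welfare N p C xS) in *. set (e := welfare N p Cb xS) in *.
    split. apply Rdiv_lt_0_compat; lra.
    assert (0 < b) by lra. assert (0 < c) by lra.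
    replace (a / b) with ((a * c) / (b * c)) by (field; lra).
    replace ((a + d) / c) with (((a + d) * b) / (b * c)) by (field; lra).
    unfold Rdiv. apply Rmult_le_compat_r.
    + left; apply Rinv_0_lt_compat; nra.
    + nra.
Qed.
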